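(* Let $n\ge4$, $2\le p\le n-1$, $j=n-p+1$. Let $\textnormal{Reg}(\mathcal{OCT}_n)$ be the set of regular elements of $\mathcal{OCT}_n$, $L(n,p)=\{\alpha\in\textnormal{Reg}(\mathcal{OCT}_n):|\textnormal{Im}\,\alpha|\le p\}$, $K_p=\{\alpha\in\textnormal{Reg}(\mathcal{OCT}_n):|\textnormal{Im}\,\alpha|=p\}$, and let $Q_p=K_p\cup\{0\}$ be the Rees quotient $L(n,p)/L(n,p-1)$, with product $\alpha*\beta=\alpha\beta$ if $|\textnormal{Im}(\alpha\beta)|=p$ and $\alpha*\beta=0$ otherwise. Define $\eta,\delta\in\mathcal{T}_n$ by: $x\eta=1$ for $1\le x\le j$ and $(j+i)\eta=i+1$ for $1\le i\le p-1$; $x\delta=x$ for $1\le x\le p-1$ and $x\delta=p$ for $p\le x\le n$. Let $R_\eta=\{\alpha\in K_p:\textnormal{Im}\,\alpha=\textnormal{Im}\,\eta\}$ and $L_\delta=\{\alpha\in K_p:\ker\alpha=\ker\delta\}$. Then $(R_\eta\cup L_\delta)\setminus\{\delta\}$ is a minimal generating set of the semigroup $Q_p$ (it generates $Q_p$ and no proper subset of it does).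
   Context: Maps are written on the right and composed left to right: $x(\alpha\beta)=(x\alpha)\beta$. $\mathcal{T}_n$ is the full transformation semigroup on $[n]=\{1,\dots,n\}$. $\alpha$ is a contraction if $|x\alpha-y\alpha|\le|x-y|$ for all $x,y$, order-preserving if $x\le y\Rightarrow x\alpha\le y\alpha$. $\mathcal{OCT}_n$ is the semigroup of order-preserving contractions; $\alpha\in\mathcal{OCT}_n$ is regular if $\alpha\beta\alpha=\alpha$ for some $\beta\in\mathcal{OCT}_n$ (these form a subsemigroup). $\ker\alpha=\{(x,y):x\alpha=y\alpha\}$. *)

(* Defs.v *)
(* Transformations of [n] = {1..n} are modelled as
   finite functions on 'I_n = {0..n-1} (shift by one; contraction and
   order-preservation are translation invariant). *)
From mathcomp Require Import all_boot.
Set Implicit Arguments. Unset Strict Implicit. Unset Printing Implicit Defensive.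

Notation tr n := {ffun 'I_n -> 'I_n}.

(* maps on the right: x (a b) = (x a) b *)
Definition tmul n (a b : tr n) : tr n := [ffun x => b (a x)].

Definition distn (x y : nat) : nat := (x - y) + (y - x).

Definition is_contraction n (a : tr n) : bool :=
  [forall x : 'I_n, forall y : 'I_n, distn (a x) (a y) <= distn x y].

Definition is_order_preserving n (a : tr n) : bool :=
  [forall x : 'I_n, forall y : 'I_n, (x <= y) ==> (a x <= a y)].

Definition in_OCT n (a : tr n) : bool := is_order_preserving a && is_contraction a.

Definition is_regular_OCT n (a : tr n) : bool :=
  in_OCT a && [exists b : tr n, in_OCT b && (tmul (tmul a b) a == a)].

Definition imset_of n (a : tr n) : {set 'I_n} := [set a x | x : 'I_n].
Definition rank n (a : tr n) : nat := #|imset_of a|.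

Definition same_kernel n (a b : tr n) : bool :=
  [forall x : 'I_n, forall y : 'I_n, (a x == a y) == (b x == b y)].

Definition Kp n p : {set tr n} := [set a | is_regular_OCT a && (rank a == p)].

(* Q_p = K_p u {0}, with 0 represented by None *)
Definition Qp n p : {set option (tr n)} :=
  [set o | if o is Some a then a \in Kp n p else true].

Definition qmul n p (u v : option (tr n)) : option (tr n) :=
  match u, v with
  | Some a, Some b => if rank (tmul a b) == p then Some (tmul a b) else None
  | _, _ => None
  end.

Inductive generated n p (G : {set option (tr n)}) : option (tr n) -> Prop :=
  | gen_base u : u \in G -> generated p G u
  | gen_mul u v : generated p G u -> generated p G v -> generated p G (qmul p u v).

Definition generates n p (G : {set option (tr n)}) : Prop :=
  forall u, u \in Qp n p -> generated p G u.

(* 1-based: x eta = 1 for x <= j, (j+i) eta = i+1; 0-based: x |-> x - (n-p) *)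
Definition eta_map n p : tr n :=
  [ffun x : 'I_n => Ordinal (leq_ltn_trans (leq_subr (n - p) x) (ltn_ord x))].

(* 1-based: x delta = min(x, p); 0-based: x |-> min(x, p-1) *)
Definition delta_map n p : tr n :=
  [ffun x : 'I_n => Ordinal (leq_ltn_trans (geq_minl x (p.-1)) (ltn_ord x))].

Definition R_eta n p : {set tr n} :=
  [set a in Kp n p | imset_of a == imset_of (eta_map n p)].
Definition L_delta n p : {set tr n} :=
  [set a in Kp n p | same_kernel a (delta_map n p)].

Definition gen_set n p : {set option (tr n)} :=
  [set Some a | a in (R_eta n p :|: L_delta n p) :\ delta_map n p].

(* Main.v *)
Require Import Defs.
From mathcomp Require Import all_boot zify.
Set Implicit Arguments. Unset Strict Implicit. Unset Printing Implicit Defensive.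

Definition E (m k s q : nat) : tr m.+1 :=
  [ffun x : 'I_m.+1 => inord (s + minn (x - k) q)].

Lemma E_val m k s q x : s + q <= m -> nat_of_ord (E m k s q x) = s + minn (x - k) q.
Proof. move=> h; rewrite /E ffunE /= inordK //; lia. Qed.

Lemma E_OCT m k s q : s + q <= m -> in_OCT (E m k s q).
Proof.
move=> h; apply/andP; split.
- apply/forallP => x; apply/forallP => y; apply/implyP => hxy.
  rewrite !E_val //; lia.
- apply/forallP => x; apply/forallP => y; rewrite /distn !E_val //; lia.
Qed.

Lemma E_mul m k s s' q : s + q <= m -> s' + q <= m ->
  tmul (E m k s q) (E m s s' q) = E m k s' q.
Proof.
move=> h1 h2; apply/ffunP => x; apply/val_inj => /=; rewrite /tmul ffunE !E_val //; lia.
Qed.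

Lemma E_img m k s q : k + q <= m -> s + q <= m ->
  imset_of (E m k s q) = [set (inord (s + i) : 'I_m.+1) | i : 'I_q.+1].
Proof.
move=> h1 h2; apply/setP => y; apply/imsetP/imsetP => [[x _ ->]|[i _ ->]].
- exists (inord (minn (x - k) q)) => //.
  apply/val_inj => /=; rewrite E_val // !inordK //; lia.
- have := ltn_ord i => hi.
  exists (inord (k + i)) => //. apply/val_inj => /=; rewrite E_val // !inordK //; lia.
Qed.

Lemma E_rank m k s q : k + q <= m -> s + q <= m -> rank (E m k s q) = q.+1.
Proof.
move=> h1 h2; rewrite /rank E_img // card_imset ?card_ord //.
move=> i j h; apply/val_inj => /=; have := ltn_ord i; have := ltn_ord j => hi hj.
move/(congr1 val) : h => /=; rewrite !inordK; lia.
Qed.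

Lemma E_reg m k s q : k + q <= m -> s + q <= m -> is_regular_OCT (E m k s q).
Proof.
move=> h1 h2; apply/andP; split; first exact: E_OCT.
apply/existsP; exists (E m s k q); rewrite E_OCT //= !E_mul //.
Qed.

Lemma E_Kp m k s p : 2 <= p -> k + p.-1 <= m -> s + p.-1 <= m ->
  E m k s p.-1 \in Kp m.+1 p.
Proof.
move=> hp h1 h2; rewrite inE E_reg //= E_rank //; apply/eqP; lia.
Qed.

Lemma E_inj m k s k' s' q : 0 < q -> k + q <= m -> k' + q <= m ->
  s + q <= m -> s' + q <= m ->
  E m k s q = E m k' s' q -> k = k' /\ s = s'.
Proof.
move=> hq h1 h2 h3 h4 h.
have hv x : x <= m -> s + minn (x - k) q = s' + minn (x - k') q.
  move=> hx; move: (congr1 (fun f : tr m.+1 => nat_of_ord (f (inord x))) h) => /=.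
  by rewrite !E_val // inordK.
have := hv 0 (leq0n _); have := hv (k.+1) ltac:(lia); have := hv (k'.+1) ltac:(lia).
lia.
Qed.

Lemma E_ker m k s q x y : s + q <= m ->
  (E m k s q x == E m k s q y) = (minn (x - k) q == minn (y - k) q).
Proof. by move=> h; rewrite -val_eqE /= !E_val // eqn_add2l. Qed.

Lemma E_mul0 m k s k' s' q : 0 < q -> k + q <= m -> s + q <= m ->
  k' + q <= m -> s' + q <= m -> s != k' ->
  rank (tmul (E m k s q) (E m k' s' q)) <= q.
Proof.
move=> hq h1 h2 h3 h4 hne.
set P := tmul _ _.
have hP x : nat_of_ord (P x) = s' + minn ((s + minn (x - k) q) - k') q.
  by rewrite /P /tmul ffunE !E_val.
have [lo [hlo hlm]] : exists lo, (forall x, lo <= nat_of_ord (P x) < lo + q) /\ lo + q <= m.+1.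
  case: (ltngtP s k') hne => // hs _.
  - exists s'; split; last lia. move=> x; rewrite hP; lia.
  - exists s'.+1; split; last lia. move=> x; rewrite hP; lia.
rewrite /rank.
apply: (leq_trans (subset_leq_card (_ : _ \subset [set (inord (lo + val i) : 'I_m.+1) | i : 'I_q]))).
  apply/subsetP => y /imsetP [x _ ->]; apply/imsetP.
  have hlt : nat_of_ord (P x) - lo < q by have := hlo x; lia.
  exists (Ordinal hlt) => //; apply/val_inj => /=; rewrite /= inordK; have := hlo x; lia.
by apply: leq_trans (leq_imset_card _ _) _; rewrite card_ord.
Qed.
Lemma charK m p a : 2 <= p -> a \in Kp m.+1 p ->
  exists k s, [/\ k + p.-1 <= m, s + p.-1 <= m & a = E m k s p.-1].
Proof.
move=> hp; rewrite inE => /andP [/andP [aoct /existsP [b /andP [boct /eqP hab]]] /eqP hr].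
move: aoct boct => /andP [/forallP amo /forallP act] /andP [/forallP bmo /forallP bct].
pose A x := nat_of_ord (a (inord x)). pose B y := nat_of_ord (b (inord y)).
have Amo x y : x <= y -> y <= m -> A x <= A y.
  move=> hxy hy; have /forallP /(_ (inord y)) /implyP H := amo (inord x).
  apply: H; rewrite !inordK; lia.
have Bmo x y : x <= y -> y <= m -> B x <= B y.
  move=> hxy hy; have /forallP /(_ (inord y)) /implyP H := bmo (inord x).
  apply: H; rewrite !inordK; lia.
have Act x y : x <= m -> y <= m -> distn (A x) (A y) <= distn x y.
  move=> hx hy; have /forallP /(_ (inord y)) H := act (inord x).
  by move: H; rewrite !inordK.
have Bct x y : x <= m -> y <= m -> distn (B x) (B y) <= distn x y.
  move=> hx hy; have /forallP /(_ (inord y)) H := bct (inord x).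
  by move: H; rewrite !inordK.
have Astep x : x < m -> A x.+1 <= (A x).+1.
  move=> hx; have := Act x x.+1 (ltnW hx) hx; have := Amo x x.+1 (leqnSn x) hx.
  rewrite /distn; lia.
have Bstep x : x < m -> B x.+1 <= (B x).+1.
  move=> hx; have := Bct x x.+1 (ltnW hx) hx; have := Bmo x x.+1 (leqnSn x) hx.
  rewrite /distn; lia.
have Ble y : B y <= m by rewrite /B -ltnS; apply: ltn_ord.
have Ale y : A y <= m by rewrite /A -ltnS; apply: ltn_ord.
have Sec x : x <= m -> A (B (A x)) = A x.
  move=> hx; have := congr1 (fun f : tr m.+1 => nat_of_ord (f (inord x))) hab.
  by rewrite /= /tmul !ffunE /A /B !inord_val.
have IVT x : x <= m -> forall y, A 0 <= y <= A x -> exists z, z <= x /\ A z = y.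
  elim: x => [|x IH] hx y hy.
    by exists 0; split => //; lia.
  case: (leqP y (A x)) => hyx.
    have [z [hz1 hz2]] := IH (ltnW hx) y ltac:(lia).
    by exists z; split => //; lia.
  exists x.+1; split => //; have := Astep x hx; lia.
have hA x : A x = nat_of_ord (a (inord x)) by [].
clearbody A B.
have [s hs] : exists s, A 0 = s by eauto.
have [M hM] : exists M, A m = M by eauto.
have Sec' y : s <= y <= M -> A (B y) = y.
  move=> hy; have [z [hz <-]] := IVT m (leqnn m) y ltac:(lia); apply: Sec; lia.
have [k hk] : exists k, B s = k by eauto.
have sM : s <= M by rewrite -hs -hM; apply: Amo; lia.
have Cind i : s + i <= M -> B (s + i) = k + i.
  elim: i => [|i IH] h; first by rewrite !addn0.
  have e1 := IH ltac:(lia).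
  have h1 := Bmo (s + i) (s + i).+1 (leqnSn _) ltac:(have := Ale m; lia).
  have h2 := Bstep (s + i) ltac:(have := Ale m; lia).
  have h3 : B (s + i.+1) != B (s + i).
    apply/eqP => e; have E1 := Sec' (s + i.+1) ltac:(lia).
    have E2 := Sec' (s + i) ltac:(lia). rewrite e in E1; lia.
  rewrite addnS in h3 *; lia.
have Ak i : i <= M - s -> A (k + i) = s + i.
  move=> hi; rewrite -Cind; last lia. apply: Sec'; lia.
have kM : k + (M - s) <= m by rewrite -Cind; [apply: Ble | lia].
have F x : x <= m -> A x = s + minn (x - k) (M - s).
  move=> hx; case: (leqP x k) => hxk.
    have := Amo 0 x (leq0n _) hx; have := Amo x k hxk ltac:(lia); have := Ak 0 (leq0n _).
    rewrite addn0; lia.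
  case: (leqP x (k + (M - s))) => hx2.
    have := Ak (x - k) ltac:(lia); rewrite subnKC; last lia. lia.
  have := Amo (k + (M - s)) x ltac:(lia) hx; have := Amo x m hx (leqnn _).
  have := Ak (M - s) (leqnn _); lia.
have aE : a = E m k s (M - s).
  apply/ffunP => x; apply/val_inj => /=; rewrite E_val; last by have := Ale m; lia.
  by move: (F x (leq_ord x)); rewrite hA inord_val.
move: (Ale m) => HAm; rewrite aE E_rank in hr; try lia.
exists k, s; split; try lia. by rewrite aE -hr.
Qed.

Lemma eta_E m p : 1 <= p <= m.+1 -> eta_map m.+1 p = E m (m.+1 - p) 0 p.-1.
Proof.
move=> hp; apply/ffunP => x; apply/val_inj => /=; rewrite E_val; last lia.
rewrite /eta_map ffunE /=; have := ltn_ord x; lia.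
Qed.

Lemma delta_E m p : 1 <= p <= m.+1 -> delta_map m.+1 p = E m 0 0 p.-1.
Proof.
move=> hp; apply/ffunP => x; apply/val_inj => /=; rewrite E_val; last lia.
rewrite /delta_map ffunE /=; lia.
Qed.

Lemma R_s m k s k' q : k + q <= m -> s + q <= m -> k' + q <= m ->
  imset_of (E m k s q) = imset_of (E m k' 0 q) -> s = 0.
Proof.
move=> h1 h2 h3 he.
have : (inord 0 : 'I_m.+1) \in imset_of (E m k s q).
  rewrite he E_img //; last lia. apply/imsetP; exists ord0 => //.
rewrite E_img // => /imsetP [i _ /(congr1 val)] /=; rewrite !inordK //; first lia.
have := ltn_ord i; lia.
Qed.

Lemma L_k m k s q : 0 < q -> k + q <= m -> s + q <= m ->
  same_kernel (E m k s q) (E m 0 0 q) -> k = 0.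
Proof.
move=> hq h1 h2 /forallP /(_ ord0) /forallP /(_ (inord k)) /eqP.
rewrite !E_ker //; last lia. rewrite inordK; last lia.
rewrite /= subnn sub0n eqxx => /esym/eqP; lia.
Qed.

Lemma gen_elem m p b : 2 <= p <= m ->
  b \in (R_eta m.+1 p :|: L_delta m.+1 p) :\ delta_map m.+1 p ->
  exists k s, [/\ k + p.-1 <= m, s + p.-1 <= m, b = E m k s p.-1 &
     (s = 0 /\ k != 0) \/ (k = 0 /\ s != 0)].
Proof.
move=> hp; rewrite in_setD1 in_setU => /andP [hnd /orP [hR|hL]].
- move: hR; rewrite /R_eta inE => /andP [hK himg].
  have [k [s [h1 h2 hb]]] := charK (p := p) ltac:(lia) hK.
  exists k, s; split => //. subst b.
  move: himg; rewrite eta_E; last lia. move=> /eqP /R_s hs.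
  have hs0 : s = 0 by apply: hs; lia.
  left; split => //; apply/negP => /eqP hk0; subst.
  by move: hnd; rewrite delta_E ?eqxx //; lia.
- move: hL; rewrite /L_delta inE => /andP [hK hker].
  have [k [s [h1 h2 hb]]] := charK (p := p) ltac:(lia) hK.
  exists k, s; split => //. subst b.
  move: hker; rewrite delta_E; last lia. move=> /L_k hk.
  have hk0 : k = 0 by apply: hk; lia.
  right; split => //; apply/negP => /eqP hs0; subst.
  by move: hnd; rewrite delta_E ?eqxx //; lia.
Qed.

Lemma gen_inv m p (T : {set option (tr m.+1)}) (P : nat -> nat -> Prop) :
  2 <= p -> (forall k1 s1 k2 s2, P k1 s1 -> P k2 s2 -> P k1 s2) ->
  (forall u, u \in T -> u = None \/ exists k s,
      [/\ k + p.-1 <= m, s + p.-1 <= m, P k s & u = Some (E m k s p.-1)]) ->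
  forall u, generated p T u -> u = None \/ exists k s,
      [/\ k + p.-1 <= m, s + p.-1 <= m, P k s & u = Some (E m k s p.-1)].
Proof.
move=> hp hcl hT u; elim=> [v hv| v w _ IHv _ IHw]; first exact: hT.
case: IHv => [->|[k1 [s1 [h1 h2 h3 ->]]]]; first by left.
case: IHw => [->|[k2 [s2 [h4 h5 h6 ->]]]]; first by left.
rewrite /=; case: (eqVneq s1 k2) => [<-|hne].
- rewrite E_mul // E_rank // prednK; last lia. rewrite eqxx.
  right; exists k1, s2; split => //; exact: hcl h3 h6.
- rewrite ifN; first by left.
  have := E_mul0 (m := m) (k := k1) (s' := s2) (q := p.-1) ltac:(lia) h1 h2 h4 h5 hne.
  lia.
Qed.

Lemma in_gen m p k s : 2 <= p <= m -> k + p.-1 <= m -> s + p.-1 <= m ->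
  (s = 0 /\ k != 0) \/ (k = 0 /\ s != 0) ->
  Some (E m k s p.-1) \in gen_set m.+1 p.
Proof.
move=> hp h1 h2 hc; apply/imsetP; exists (E m k s p.-1) => //.
rewrite in_setD1 in_setU; apply/andP; split.
  rewrite delta_E; last lia. apply/eqP => /E_inj; lia.
case: hc => [[hs hk]|[hk hs]]; subst.
- apply/orP; left; rewrite /R_eta inE E_Kp //; try lia.
  by rewrite eta_E ?E_img ?eqxx //; lia.
- apply/orP; right; rewrite /L_delta inE E_Kp //; try lia.
  rewrite delta_E; last lia.
  apply/forallP => x; apply/forallP => y; rewrite !E_ker //; lia.
Qed.

Theorem lemma8 (n p : nat) :
  4 <= n -> 2 <= p <= n.-1 ->
  generates p (gen_set n p) /\
  (forall T : {set option (tr n)}, T \proper gen_set n p -> ~ generates p T).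
Proof.
case: n => [|m] // hn hp; rewrite /= in hp.
have hq : 0 < p.-1 by lia.
have hb1 : 1 + p.-1 <= m by lia.
have hb0 : 0 + p.-1 <= m by lia.
have hmul : forall k s s', k + p.-1 <= m -> s + p.-1 <= m -> s' + p.-1 <= m ->
    qmul p (Some (E m k s p.-1)) (Some (E m s s' p.-1)) = Some (E m k s' p.-1).
  move=> k s s' h1 h2 h3; rewrite /= E_mul // E_rank // prednK ?eqxx //; lia.
split.
- move=> [a|] hu.
  + move: hu; rewrite /Qp inE /= => hK.
    have [k [s [h1 h2 ->]]] := charK (p := p) ltac:(lia) hK.
    case: (eqVneq k 0) => hk; case: (eqVneq s 0) => hs; subst.
    * rewrite -(hmul 0 1 0) //; apply: gen_mul; apply: gen_base; apply: in_gen => //; lia.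
    * apply: gen_base; apply: in_gen => //; lia.
    * apply: gen_base; apply: in_gen => //; lia.
    * rewrite -(hmul k 0 s) //; apply: gen_mul; apply: gen_base; apply: in_gen => //; lia.
  + have -> : None = qmul p (Some (E m 1 0 p.-1)) (Some (E m 1 0 p.-1)).
      rewrite /= ifN //.
      have := E_mul0 (m := m) (k := 1) (s := 0) (k' := 1) (s' := 0) hq hb1 hb0 hb1 hb0 isT.
      lia.
    apply: gen_mul; apply: gen_base; apply: in_gen => //; lia.
- move=> T /properP [hsub [g hg hgT]] hgen.
  case/imsetP: hg hgT => a ha -> hgT.
  have [k [s [h1 h2 ha' hc]]] := gen_elem (m := m) (p := p) ltac:(lia) ha.
  have hgena : generated p T (Some a).
    apply: hgen; rewrite /Qp inE /= ha'; apply: E_Kp => //; lia.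
  have hTi : forall P : nat -> nat -> Prop,
      (forall k' s', ((s' = 0 /\ k' != 0) \/ (k' = 0 /\ s' != 0)) ->
          (k' = k /\ s' = s) \/ P k' s') ->
      forall u, u \in T -> u = None \/ exists k s,
      [/\ k + p.-1 <= m, s + p.-1 <= m, P k s & u = Some (E m k s p.-1)].
    move=> P HP u hu; right.
    case/imsetP: (subsetP hsub u hu) => b hb hub.
    have [k' [s' [h1' h2' hb' hc']]] := gen_elem (m := m) (p := p) ltac:(lia) hb.
    exists k', s'; split => //; last by rewrite hub hb'.
    case: (HP k' s' hc') => // [[ek es]].
    rewrite ek es in hb'. by move: hgT; rewrite ha' -hb' -hub hu.
  case: hc => [[hs hk]|[hk hs]].
  + have HPr : forall k' s', ((s' = 0 /\ k' != 0) \/ (k' = 0 /\ s' != 0)) ->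
        (k' = k /\ s' = s) \/ k' <> k.
      move=> k' s' hc'; case: (eqVneq k' k) => [ek|nk]; last by right => /eqP; rewrite (negbTE nk).
      left; split => //; case: hc' => [[-> _]|[ek0 _]] //; subst; by rewrite eqxx in hk.
    case: (gen_inv (P := fun k' _ => k' <> k) (m := m) (p := p) ltac:(lia) (fun _ _ _ _ h _ => h)
      (hTi _ HPr) hgena) => [e|[k' [s' [hk1 hs1 hP e]]]]; first by discriminate.
    case: e => e; rewrite ha' in e; have := E_inj hq h1 hk1 h2 hs1 e; lia.
  + have HPr : forall k' s', ((s' = 0 /\ k' != 0) \/ (k' = 0 /\ s' != 0)) ->
        (k' = k /\ s' = s) \/ s' <> s.
      move=> k' s' hc'; case: (eqVneq s' s) => [es|ns]; last by right => /eqP; rewrite (negbTE ns).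
      left; split => //; case: hc' => [[es0 _]|[-> _]] //; subst; by rewrite eqxx in hs.
    case: (gen_inv (P := fun _ s' => s' <> s) (m := m) (p := p) ltac:(lia) (fun _ _ _ _ _ h => h)
      (hTi _ HPr) hgena) => [e|[k' [s' [hk1 hs1 hP e]]]]; first by discriminate.
    case: e => e; rewrite ha' in e; have := E_inj hq h1 hk1 h2 hs1 e; lia.
Qed.
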